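(* The rank one extreme contractions in $\mathbb{L}(\ell_4^2)$ are exactly the operators whose matrix representations with respect to the standard ordered basis are of the form $\begin{bmatrix} x_1 & 0\\ y_1 & 0\end{bmatrix}$ or $\begin{bmatrix} 0 & x_1\\ 0 & y_1\end{bmatrix}$, where $x_1y_1\neq0$ and $x_1^4+y_1^4=1$.
   Context: $\ell_4^2$ is $\mathbb{R}^2$ with norm $\|(a,b)\|=(a^4+b^4)^{1/4}$, and $\mathbb{L}(\ell_4^2)$ the space of linear operators on it with the operator norm. An extreme contraction is a norm one operator that is an extreme point of the closed unit ball of $\mathbb{L}(\ell_4^2)$. *)

(* Defs.v *)
From HB Require Import structures.
From mathcomp Require Import all_boot all_order all_algebra.
From mathcomp Require Import all_classical all_reals.
Set Implicit Arguments. Unset Strict Implicit. Unset Printing Implicit Defensive.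
Import Order.TTheory GRing.Theory Num.Theory.
Local Open Scope ring_scope.
Local Open Scope classical_set_scope.

Definition norm4 (R : realType) (v : 'cV[R]_2) : R :=
  Num.sqrt (Num.sqrt (v ord0 ord0 ^+ 4 + v ord_max ord0 ^+ 4)).

(* Operators on l_4^2 are identified with their 2x2 matrices w.r.t. the
   standard ordered basis, acting on column vectors: T v = A *m v. *)
Definition opnorm (R : realType) (A : 'M[R]_2) : R :=
  sup [set norm4 (A *m v) | v in [set v : 'cV[R]_2 | norm4 v <= 1]].

Definition in_unit_ball (R : realType) (A : 'M[R]_2) : Prop := opnorm A <= 1.

Definition extreme_point_ball (R : realType) (A : 'M[R]_2) : Prop :=
  in_unit_ball A /\
  forall (B C : 'M[R]_2) (t : R), in_unit_ball B -> in_unit_ball C ->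
    0 < t < 1 -> A = t *: B + (1 - t) *: C -> B = A /\ C = A.

Definition extreme_contraction (R : realType) (A : 'M[R]_2) : Prop :=
  opnorm A = 1 /\ extreme_point_ball A.

(* Main.v *)
Require Import Defs.
From HB Require Import structures.
From mathcomp Require Import all_boot all_order all_algebra.
From mathcomp Require Import all_classical all_reals.
From mathcomp Require Import ring lra.
Set Implicit Arguments. Unset Strict Implicit. Unset Printing Implicit Defensive.
Import Order.TTheory GRing.Theory Num.Theory.
Local Open Scope ring_scope.

Section S2.
Variable R : realType.
Implicit Types (A B : 'M[R]_2) (v : 'cV[R]_2).

Lemma ord2P (i : 'I_2) : i = ord0 \/ i = ord_max.
Proof. case: i => [[|[|n]]] Hi; [left|right|]; try by apply/val_inj. by []. Qed.

Lemma w1 : widen_ord (leqnSn 1) ord_max = ord0 :> 'I_2.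
Proof. by apply/val_inj. Qed.

Lemma mulmxE2 m n (A : 'M[R]_(m,2)) (B : 'M[R]_(2,n)) i j :
  (A *m B) i j = A i ord0 * B ord0 j + A i ord_max * B ord_max j.
Proof. by rewrite mxE !big_ord_recr big_ord0 /= add0r w1. Qed.

Lemma mx2_eq A B : A ord0 ord0 = B ord0 ord0 -> A ord0 ord_max = B ord0 ord_max ->
  A ord_max ord0 = B ord_max ord0 -> A ord_max ord_max = B ord_max ord_max -> A = B.
Proof.
move=> h1 h2 h3 h4; apply/matrixP => i j.
by case: (ord2P i) => ->; case: (ord2P j) => ->.
Qed.

Definition mkv (p q : R) : 'cV[R]_2 := \matrix_(i, j) (if i == ord0 then p else q).
Lemma mkv0 p q : mkv p q ord0 ord0 = p. Proof. by rewrite mxE. Qed.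
Lemma mkv1 p q : mkv p q ord_max ord0 = q. Proof. by rewrite mxE. Qed.

Definition Pm A p q := (A ord0 ord0 * p + A ord0 ord_max * q)^+4
   + (A ord_max ord0 * p + A ord_max ord_max * q)^+4.
Definition contr A := forall p q, Pm A p q <= p^+4 + q^+4.

Lemma norm4E v : norm4 v = Num.sqrt (Num.sqrt (v ord0 ord0 ^+ 4 + v ord_max ord0 ^+ 4)).
Proof. by []. Qed.

Lemma norm4M A v : norm4 (A *m v) = Num.sqrt (Num.sqrt (Pm A (v ord0 ord0) (v ord_max ord0))).
Proof. by rewrite norm4E !mulmxE2. Qed.

Lemma ss4 (x : R) : 0 <= x -> Num.sqrt (Num.sqrt x) ^+ 4 = x.
Proof.
move=> x0; have -> : (4 = 2 * 2)%N by [].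
by rewrite exprM sqr_sqrtr ?sqrtr_ge0 // sqr_sqrtr.
Qed.

Lemma ss_ge0 (x : R) : 0 <= Num.sqrt (Num.sqrt x). Proof. exact: sqrtr_ge0. Qed.

Lemma ss_le1 (x : R) : 0 <= x -> (Num.sqrt (Num.sqrt x) <= 1) = (x <= 1).
Proof. by move=> x0; rewrite -{1}sqrtr1 ler_sqrt // -{1}sqrtr1 ler_sqrt. Qed.

Lemma Pm_ge0 A p q : 0 <= Pm A p q.
Proof. by rewrite /Pm addr_ge0 // exprn_even_ge0. Qed.

Lemma s4_ge0 (p q : R) : 0 <= p^+4 + q^+4.
Proof. by rewrite addr_ge0 // exprn_even_ge0. Qed.

Lemma opnorm_le A (K : R) : 0 <= K -> (forall p q, p^+4+q^+4 <= 1 -> Pm A p q <= K) ->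
  opnorm A <= Num.sqrt (Num.sqrt K).
Proof.
move=> K0 HK; apply: ge_sup.
  by exists (norm4 (A *m 0)); exists 0 => //=; rewrite /norm4 !mxE expr0n /= addr0 !sqrtr0 ler01.
move=> y [v /= Hv <-]; rewrite norm4M.
rewrite ler_sqrt ?sqrtr_ge0 // ler_sqrt //; apply: HK.
by move: Hv; rewrite norm4E ss_le1 // s4_ge0.
Qed.

Lemma contr_opnorm A : contr A -> opnorm A <= 1.
Proof.
move=> H; rewrite -[1]sqrtr1 -{1}sqrtr1; apply: opnorm_le => // p q h.
exact: le_trans (H p q) h.
Qed.

Lemma pow4_le8 (x y : R) : (x + y)^+4 <= 8 * (x^+4 + y^+4).
Proof.
rewrite -subr_ge0.
have -> : 8 * (x^+4 + y^+4) - (x+y)^+4 = (x-y)^+2 * (7*x^+2 + 10*x*y + 7*y^+2) by ring.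
apply: mulr_ge0; first exact: sqr_ge0.
have -> : 7*x^+2 + 10*x*y + 7*y^+2 = 5*(x+y)^+2 + 2*x^+2 + 2*y^+2 by ring.
by rewrite !addr_ge0 // mulr_ge0 // sqr_ge0.
Qed.

Definition Mb A := 8 * (A ord0 ord0 ^+4 + A ord0 ord_max ^+4) + 8 * (A ord_max ord0 ^+4 + A ord_max ord_max ^+4).

Lemma le1_4 (p q : R) : p^+4 + q^+4 <= 1 -> p^+4 <= 1.
Proof. move=> h; have := exprn_even_ge0 q (isT : ~~ odd 4); lra. Qed.

Lemma Pm_bound A p q : p^+4 + q^+4 <= 1 -> Pm A p q <= Mb A.
Proof.
move=> h; have hp := le1_4 h; have hq : q^+4 <= 1 by apply: (@le1_4 q p); lra.
have key : forall a b : R, (a * p + b * q)^+4 <= 8 * (a^+4 + b^+4).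
  move=> a b; apply: le_trans (pow4_le8 _ _) _.
  rewrite ler_pM2l // !exprMn lerD // ler_piMr // exprn_even_ge0 //.
by rewrite /Pm /Mb lerD.
Qed.

Lemma z_le (z : R) : 0 <= z -> z <= 1 + z^+4.
Proof.
move=> z0; rewrite -subr_ge0.
have -> : 1 + z^+4 - z = (z^+2 - 1/2)^+2 + ((z - 1/2)^+2 + 1/2) by field.
apply: addr_ge0; first exact: sqr_ge0. apply: addr_ge0; [exact: sqr_ge0| lra].
Qed.

Lemma opnorm_ub A : has_ubound [set norm4 (A *m v) | v in [set v : 'cV[R]_2 | norm4 v <= 1]].
Proof.
exists (1 + Mb A) => y [v /= Hv <-]; rewrite norm4M.
apply: le_trans (z_le (ss_ge0 _)) _; rewrite ss4 ?Pm_ge0 // lerD2l.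
apply: Pm_bound; by move: Hv; rewrite norm4E ss_le1 // s4_ge0.
Qed.

Lemma le_opnorm A v : norm4 v <= 1 -> norm4 (A *m v) <= opnorm A.
Proof. move=> h; apply: (ub_le_sup (opnorm_ub A)); by exists v. Qed.

Lemma opnorm_contr A : opnorm A <= 1 -> contr A.
Proof.
move=> H p q.
have S0 := s4_ge0 p q.
have [S00|Sp] := eqVneq (p^+4 + q^+4) 0.
  have p0 : p^+4 = 0 by have := exprn_even_ge0 q (isT : ~~ odd 4); have := exprn_even_ge0 p (isT : ~~ odd 4); lra.
  have q0 : q^+4 = 0 by lra.
  move/eqP: p0; rewrite expf_eq0 /= => /eqP ->.
  move/eqP: q0; rewrite expf_eq0 /= => /eqP ->.
  by rewrite /Pm !mulr0 !addr0 expr0n /= addr0.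
set l := Num.sqrt (Num.sqrt (p^+4 + q^+4)).
have l4 : l^+4 = p^+4 + q^+4 by rewrite ss4.
have l0 : 0 < l.
  rewrite lt_def ss_ge0 andbT; apply/eqP => l0; move: l4; rewrite l0 expr0n /= => /esym.
  by apply/eqP.
have l40 : l^+4 != 0 by rewrite expf_eq0 /= gt_eqF.
have := le_opnorm A (v := mkv (p/l) (q/l)).
rewrite norm4M norm4E !mkv0 !mkv1 ss_le1 ?s4_ge0 //.
have -> : (p / l) ^+ 4 + (q / l) ^+ 4 = (p^+4 + q^+4) / l^+4 by field; rewrite gt_eqF.
rewrite -l4 divff // lexx => /(_ isT) h.
have : Num.sqrt (Num.sqrt (Pm A (p / l) (q / l))) <= 1 by apply: le_trans H.
rewrite ss_le1 ?Pm_ge0 //.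
have -> : Pm A (p / l) (q / l) = Pm A p q / l^+4 by rewrite /Pm; field; rewrite gt_eqF.
by rewrite ler_pdivrMr ?exprn_gt0 // mul1r l4.
Qed.
End S2.


Section S3.
Variable R : realType.

Lemma key1 (t u e : R) : 0 < t < 1 -> e != 0 ->
  0 < t * (u + (1-t)*e)^+4 + (1-t)*(u - t*e)^+4 - u^+4.
Proof.
move=> /andP[t0 t1] e0.
have -> : t * (u + (1-t)*e)^+4 + (1-t)*(u - t*e)^+4 - u^+4 =
  t*(1-t)*(e^+2 * (6*u^+2 + 4*(1-2*t)*u*e + (1-3*t+3*t^2)*e^+2)) by ring.
apply: mulr_gt0; first nra.
apply: mulr_gt0; first by rewrite exprn_even_gt0.
have -> : 6*u^+2 + 4*(1-2*t)*u*e + (1-3*t+3*t^2)*e^+2 =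
  6*(u + (1-2*t)*e/3)^+2 + (1-t+t^2)/3 * e^+2 by field.
have e2 : 0 < e^+2 by rewrite exprn_even_gt0.
apply: ltr_wpDl; first by rewrite mulr_ge0 // sqr_ge0.
apply: mulr_gt0 => //; nra.
Qed.

Lemma key1' (t u e : R) : 0 < t < 1 ->
  0 <= t * (u + (1-t)*e)^+4 + (1-t)*(u - t*e)^+4 - u^+4.
Proof.
move=> ht; have [->|e0] := eqVneq e 0.
  by rewrite !mulr0 addr0 subr0; have -> : t * u ^+ 4 + (1 - t) * u ^+ 4 - u ^+ 4 = 0 by ring.
exact: ltW (key1 u ht e0).
Qed.

Lemma sc (t b1 b2 c1 c2 : R) : 0 < t < 1 -> b1^+4 + b2^+4 <= 1 -> c1^+4 + c2^+4 <= 1 ->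
  (t * b1 + (1-t) * c1)^+4 + (t * b2 + (1-t) * c2)^+4 = 1 -> b1 = c1 /\ b2 = c2.
Proof.
move=> ht hb hc hu.
set u1 := t * b1 + (1-t) * c1; set u2 := t * b2 + (1-t) * c2.
have hu' : u1^+4 + u2^+4 = 1 by [].
have eb1 : b1 = u1 + (1-t)*(b1 - c1) by rewrite /u1; ring.
have ec1 : c1 = u1 - t*(b1 - c1) by rewrite /u1; ring.
have eb2 : b2 = u2 + (1-t)*(b2 - c2) by rewrite /u2; ring.
have ec2 : c2 = u2 - t*(b2 - c2) by rewrite /u2; ring.
have t0 : 0 < t by case/andP: ht.
have t1 : t < 1 by case/andP: ht.
have hsum : (t * (u1 + (1-t)*(b1-c1))^+4 + (1-t)*(u1 - t*(b1-c1))^+4 - u1^+4) +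
            (t * (u2 + (1-t)*(b2-c2))^+4 + (1-t)*(u2 - t*(b2-c2))^+4 - u2^+4) <= 0.
  rewrite -eb1 -ec1 -eb2 -ec2.
  have t1' : 0 <= 1 - t by lra.
  have h1 := ler_wpM2l (ltW t0) hb.
  have h2 := ler_wpM2l t1' hc.
  move: h1 h2 hu'; rewrite !mulrDr !mulr1; clearbody u1 u2; lra.
have k1 := key1' u1 (b1 - c1) ht; have k2 := key1' u2 (b2 - c2) ht.
split; apply/eqP; rewrite -subr_eq0; apply/negP => /negP hne.
  have := key1 u1 ht hne; lra.
have := key1 u2 ht hne; lra.
Qed.

Lemma col2 (x y w1 w2 : R) : x * y != 0 -> x^+4 + y^+4 = 1 ->
  (forall be, (x + w1 * be)^+4 + (y + w2 * be)^+4 <= 1 + be^+4) -> w1 = 0 /\ w2 = 0.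
Proof.
move=> xy hu H.
set c := x^+2 * w1^+2 + y^+2 * w2^+2.
have c0 : 0 <= c by rewrite /c addr_ge0 // mulr_ge0 // sqr_ge0.
have cz : c = 0.
  apply/eqP; rewrite eq_le c0 andbT; rewrite leNgt; apply/negP => cp.
  set be := c / (c + 1).
  have Hp := H be; have Hm := H (- be).
  have id1 : (x + w1 * be)^+4 + (x + w1 * -be)^+4 = 2*x^+4 + 12*x^+2*w1^+2*be^+2 + 2*w1^+4*be^+4 by ring.
  have id2 : (y + w2 * be)^+4 + (y + w2 * -be)^+4 = 2*y^+4 + 12*y^+2*w2^+2*be^+2 + 2*w2^+4*be^+4 by ring.
  have hw : 0 <= (w1^+4 + w2^+4) * be^+4 by rewrite mulr_ge0 // ?addr_ge0 // exprn_even_ge0.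
  have h12 : 12 * c * be^+2 <= 2 * be^+4.
    have : (-be)^+4 = be^+4 by ring.
    rewrite /c; nra.
  have bpos : 0 < be by rewrite /be divr_gt0 // ltr_wpDl.
  have b2 : 0 < be^+2 by rewrite exprn_gt0.
  have h6 : 6 * c <= be^+2.
    have : be^+4 = be^+2 * be^+2 by ring.
    nra.
  have hlt : be^+2 < c.
    rewrite /be expr_div_n ltr_pdivrMr ?exprn_gt0 ?ltr_wpDl //.
    nra.
  lra.
have hx : x^+2 * w1^+2 = 0.
  have : 0 <= y^+2 * w2^+2 by rewrite mulr_ge0 // sqr_ge0.
  have : 0 <= x^+2 * w1^+2 by rewrite mulr_ge0 // sqr_ge0.
  move: cz; rewrite /c; lra.
have hy : y^+2 * w2^+2 = 0 by move: cz; rewrite /c hx add0r.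
move: xy; rewrite mulf_eq0 negb_or => /andP[x0 y0].
move/eqP: hx; rewrite mulf_eq0 !expf_eq0 /= (negPf x0) /= => /eqP ->.
move/eqP: hy; rewrite mulf_eq0 !expf_eq0 /= (negPf y0) /= => /eqP ->.
by [].
Qed.
End S3.


Section S4.
Variable R : realType.

Definition Ua (u1 u2 : R) := u1^+4 + u2^+4.
Definition Xc (u1 u2 : R) :=
  6 * (u1^+2 * u2^+2 * Ua u1 u2) + 2 * (u1 * u2^+9 - u2 * u1^+9)^+2 + 2 + (u1^+12 + u2^+12).
Definition Yc (u1 u2 b : R) := Ua u1 u2 * (2 * b^+4) / (2 + b^+2).

Lemma id1 (F r e u1 u2 : R) : (F * u1 + e * r * u2^+3)^+4 + (F * u2 - e * r * u1^+3)^+4 =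
   Ua u1 u2 * F^+4 + e^+2 * r^+2 * (6 * F^+2 * (u1^+2 * u2^+2 * Ua u1 u2) + 4 * F * (e * r) * (u1 * u2^+9 - u2 * u1^+9) + (e*r)^+2 * (u1^+12 + u2^+12)).
Proof. rewrite /Ua; ring. Qed.

Lemma id2 (b p q : R) : (1 + b^+4)^+3 * (p^+4 + q^+4) = (p + b^+3 * q)^+4 + (b * p - q)^+2 *
  (6 * b^+2 * (p + b^+3 * q)^+2 + 4 * b * (b^+4 - 1) * (p + b^+3 * q) * (b * p - q) + (b^+8 - b^+4 + 1) * (b * p - q)^+2).
Proof. ring. Qed.

Lemma pert (u1 u2 b e p q : R) : b != 0 ->
  Ua u1 u2 * (1 + b^+4)^+3 <= 1 -> e^+2 <= 1 -> e^+2 * Xc u1 u2 <= Yc u1 u2 b ->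
  ((p + b^+3 * q) * u1 + e * (b * p - q) * u2^+3)^+4 + ((p + b^+3 * q) * u2 - e * (b * p - q) * u1^+3)^+4 <= p^+4 + q^+4.
Proof.
move=> b0 hUN he hX.
set F := p + b^+3 * q. set r := b * p - q.
set U := Ua u1 u2.
set al := u1^+2 * u2^+2 * U.
set be := u1 * u2^+9 - u2 * u1^+9.
set ga := u1^+12 + u2^+12.
set Q := 6 * b^+2 * F^+2 + 4 * b * (b^+4 - 1) * F * r + (b^+8 - b^+4 + 1) * r^+2.
have U0 : 0 <= U by rewrite /U /Ua addr_ge0 // exprn_even_ge0.
have al0 : 0 <= al by rewrite /al mulr_ge0 // mulr_ge0 // sqr_ge0.
have ga0 : 0 <= ga by rewrite /ga addr_ge0 // exprn_even_ge0.
have h1 : (F * u1 + e * r * u2^+3)^+4 + (F * u2 - e * r * u1^+3)^+4 =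
   U * F^+4 + e^+2 * r^+2 * (6 * F^+2 * al + 4 * F * (e * r) * be + (e*r)^+2 * ga).
  exact: id1.
have h2 : (1 + b^+4)^+3 * (p^+4 + q^+4) = F^+4 + r^+2 * Q.
  exact: id2.
have h3 : 2 * b^+2 * F^+2 + b^+4 * r^+2 <= Q.
  rewrite -subr_ge0.
  have -> : Q - (2 * b^+2 * F^+2 + b^+4 * r^+2) = (2 * b * F + (b^+4 - 1) * r)^+2.
    rewrite /Q; clearbody F r; ring.
  exact: sqr_ge0.
have h4 : 6 * F^+2 * al + 4 * F * (e * r) * be + (e*r)^+2 * ga <= Xc u1 u2 * (F^+2 + r^+2).
  have hc : 4 * F * (e * r) * be <= 2 * F^+2 + 2 * be^+2 * r^+2.
    have : 0 <= (F - e * r * be)^+2 by exact: sqr_ge0.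
    have : 0 <= be^+2 * r^+2 * (1 - e^+2).
      by apply: mulr_ge0; [apply: mulr_ge0; exact: sqr_ge0 | rewrite subr_ge0].
    nra.
  have hg : (e*r)^+2 * ga <= r^+2 * ga.
    rewrite -subr_ge0.
    have -> : r^+2 * ga - (e*r)^+2 * ga = r^+2 * ga * (1 - e^+2) by clearbody r ga; ring.
    by apply: mulr_ge0; [apply: mulr_ge0 => //; exact: sqr_ge0 | rewrite subr_ge0].
  rewrite /Xc -/U -/al -/be -/ga.
  have := mulr_ge0 al0 (sqr_ge0 r).
  have := mulr_ge0 (mulr_ge0 (ler0n R 2) (sqr_ge0 be)) (sqr_ge0 F).
  have := mulr_ge0 (sqr_ge0 r) (ler0n R 2).
  have := mulr_ge0 ga0 (sqr_ge0 F).
  nra.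
have b2 : 0 < b^+2 by rewrite exprn_even_gt0.
have hY1 : Yc u1 u2 b <= U * (2 * b^+2).
  rewrite /Yc -/U -mulrA ler_wpM2l // ler_pdivrMr ?ltr_wpDr ?exprn_even_ge0 //.
  have -> : b^+4 = b^+2 * b^+2 by ring.
  nra.
have hY2 : Yc u1 u2 b <= U * b^+4.
  rewrite /Yc -/U -mulrA ler_wpM2l // ler_pdivrMr ?ltr_wpDr ?exprn_even_ge0 //.
  have : 0 <= b^+4 * b^+2 by rewrite mulr_ge0 // exprn_even_ge0.
  nra.
have h5 : e^+2 * (Xc u1 u2 * (F^+2 + r^+2)) <= U * (2 * b^+2 * F^+2 + b^+4 * r^+2).
  have f2 : 0 <= F^+2 := sqr_ge0 _.
  have r2 : 0 <= r^+2 := sqr_ge0 _.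
  have e1 := ler_wpM2r f2 (le_trans hX hY1).
  have e2 := ler_wpM2r r2 (le_trans hX hY2).
  move: e1 e2; rewrite !mulrDr; nra.
have hQ : U * (2 * b^+2 * F^+2 + b^+4 * r^+2) <= U * Q by rewrite ler_wpM2l.
rewrite h1.
have s4 : 0 <= p^+4 + q^+4 by rewrite addr_ge0 // exprn_even_ge0.
have fin : U * (F^+4 + r^+2 * Q) <= p^+4 + q^+4.
  rewrite -h2 mulrA; apply: ler_piMl => //; rewrite mulr_ge0 //; exact: exprn_ge0 (addr_ge0 ler01 (exprn_even_ge0 _ _)).
have e2' : 0 <= e^+2 := sqr_ge0 _.
have r2 : 0 <= r^+2 := sqr_ge0 _.
have step : e^+2 * r^+2 * (6 * F^+2 * al + 4 * F * (e * r) * be + (e*r)^+2 * ga) <= r^+2 * (U * Q).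
  rewrite mulrAC mulrC; apply: ler_wpM2l => //.
  apply: le_trans hQ; apply: le_trans h5; exact: ler_wpM2l.
move: fin step; rewrite mulrDr; lra.
Qed.
End S4.


Section S5.
Variable R : realType.
Implicit Types (A B : 'M[R]_2).

Lemma cube_root (k : R) : exists b : R, b^+3 = k.
Proof.
have n0 : 0 <= `|k| by [].
have hk1 : k <= `|k| := ler_norm k.
have hk2 : - k <= `|k| by rewrite -normrN ler_norm.
have c1 : `|k| + 1 <= (`|k| + 1)^+3.
  have h : 1 <= `|k| + 1 by lra.
  have : 1 <= (`|k| + 1)^+2 by exact: exprn_ege1.
  have -> : (`|k| + 1)^+3 = (`|k| + 1) * (`|k| + 1)^+2 by ring.
  nra.
have [x _ hx] := @poly_ivt R ('X^3 - k%:P) (- (`|k| + 1)) (`|k| + 1) (ltac:(lra)) (ltac:(rewrite !hornerE; apply/andP; split; [have -> : (- (`|k| + 1))^+3 = - (`|k| + 1)^+3 by ring|]; lra)).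
by exists x; move: hx; rewrite /root !hornerE subr_eq0 => /eqP.
Qed.

Definition mk2 (a b c d : R) : 'M[R]_2 :=
  \matrix_(i, j) (if i == ord0 then (if j == ord0 then a else b) else (if j == ord0 then c else d)).
Lemma mk2E a b c d : [/\ mk2 a b c d ord0 ord0 = a, mk2 a b c d ord0 ord_max = b,
  mk2 a b c d ord_max ord0 = c & mk2 a b c d ord_max ord_max = d].
Proof. by rewrite !mxE. Qed.

Lemma rank1_nz A : \rank A = 1%N -> A != 0.
Proof. by move=> h; rewrite -mxrank_eq0 h. Qed.

Lemma rank1_det A : \rank A = 1%N -> A ord0 ord0 * A ord_max ord_max = A ord0 ord_max * A ord_max ord0.
Proof.
move=> h; apply/eqP; rewrite -subr_eq0; apply/negP => /negP d0.
set d := A ord0 ord0 * A ord_max ord_max - A ord0 ord_max * A ord_max ord0 in d0.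
pose B := mk2 (A ord_max ord_max / d) (- A ord0 ord_max / d) (- A ord_max ord0 / d) (A ord0 ord0 / d).
have hAB : A *m B = 1%:M.
  have [e1 e2 e3 e4] := mk2E (A ord_max ord_max / d) (- A ord0 ord_max / d) (- A ord_max ord0 / d) (A ord0 ord0 / d).
  apply: mx2_eq; rewrite !mulmxE2 !mxE /= /d; field => //.
have /mulmx1_unit [hu _] := hAB.
by move: h; rewrite mxrank_unit.
Qed.

Lemma zero_col_rank A j : A ord0 j = 0 -> A ord_max j = 0 -> \rank A != 2%N.
Proof.
move=> h0 h1; apply/negP => /eqP h2.
have hu : A \in unitmx by rewrite -row_free_unit /row_free h2.
have := mulVmx hu; move/matrixP => /(_ j j).
by rewrite mulmxE2 h0 h1 !mulr0 addr0 !mxE eqxx /= => /eqP; rewrite eq_sym oner_eq0.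
Qed.

Lemma rank_one A j : A ord0 j = 0 -> A ord_max j = 0 -> A != 0 -> \rank A = 1%N.
Proof.
move=> h0 h1 hn; have := zero_col_rank h0 h1; have := rank_leq_row A.
rewrite -mxrank_eq0 in hn; move: hn.
by case: (\rank A) => [|[|[|n]]].
Qed.

End S5.


Section S6.
Variable R : realType.
Implicit Types (A B C E : 'M[R]_2).

Lemma ball_contr A : in_unit_ball A -> contr A.
Proof. exact: opnorm_contr. Qed.

Lemma contr_ball A : contr A -> in_unit_ball A.
Proof. exact: contr_opnorm. Qed.

Lemma noext A E : extreme_point_ball A -> contr (A + E) -> contr (A - E) -> E = 0.
Proof.
move=> [_ H] h1 h2.
have h1' : (0:R) < 1/2 by lra.
have h2' : (1/2:R) < 1 by lra.
have ht : (0:R) < (1/2:R) < (1:R) by rewrite h1' h2'.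
have := H (A + E) (A - E) (1/2) (contr_ball h1) (contr_ball h2) ht.
have hAeq : A = 1/2 *: (A + E) + (1 - 1/2) *: (A - E).
  by apply/matrixP => i j; rewrite !mxE; field.
move=> /(_ hAeq) [hh _].
have := congr1 (fun M => M - A) hh.
by rewrite /= addrAC subrr add0r.
Qed.

Lemma ss1 : Num.sqrt (Num.sqrt (1 : R)) = 1.
Proof. by rewrite !sqrtr1. Qed.

Lemma back1 (x y : R) A : x * y != 0 -> x^+4 + y^+4 = 1 ->
  A ord0 ord0 = x -> A ord_max ord0 = y -> A ord0 ord_max = 0 -> A ord_max ord_max = 0 ->
  extreme_contraction A.
Proof.
move=> xy hu a00 a10 a01 a11.
have hc : contr A.
  move=> p q; rewrite /Pm a00 a10 a01 a11 !mul0r !addr0 !exprMn.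
  have : 0 <= q^+4 by exact: exprn_even_ge0.
  rewrite -mulrDl hu mul1r; lra.
have hn : opnorm A = 1.
  apply/eqP; rewrite eq_le contr_opnorm //=.
  have := le_opnorm A (v := mkv 1 0).
  rewrite norm4M norm4E !mkv0 !mkv1 /Pm a00 a10 a01 a11 !mulr1 !mulr0 !addr0 expr0n /= addr0 expr1n ss1 hu ss1.
  by move=> /(_ (lexx _)).
split=> //; split; first by rewrite /in_unit_ball hn.
move=> B C t hB hC ht hA.
have cB := ball_contr hB; have cC := ball_contr hC.
have hB1 : B ord0 ord0 ^+4 + B ord_max ord0 ^+4 <= 1.
  by have := cB 1 0; rewrite /Pm !mulr1 !mulr0 !addr0 expr0n /= addr0 expr1n.
have hC1 : C ord0 ord0 ^+4 + C ord_max ord0 ^+4 <= 1.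
  by have := cC 1 0; rewrite /Pm !mulr1 !mulr0 !addr0 expr0n /= addr0 expr1n.
have ent : forall i j, A i j = t * B i j + (1 - t) * C i j.
  by move=> i j; rewrite hA !mxE.
have [e0 e1] : B ord0 ord0 = C ord0 ord0 /\ B ord_max ord0 = C ord_max ord0.
  apply: (sc ht hB1 hC1); by rewrite -!ent a00 a10.
have bx : B ord0 ord0 = x by rewrite -a00 ent -e0; ring.
have by' : B ord_max ord0 = y by rewrite -a10 ent -e1; ring.
have cx : C ord0 ord0 = x by rewrite -e0.
have cy : C ord_max ord0 = y by rewrite -e1.
have colz : forall D, contr D -> D ord0 ord0 = x -> D ord_max ord0 = y -> D = A.
  move=> D cD dx dy.
  have [z1 z2] : D ord0 ord_max = 0 /\ D ord_max ord_max = 0.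
    apply: (col2 xy hu) => be.
    by have := cD 1 be; rewrite /Pm !mulr1 expr1n dx dy.
  by apply: mx2_eq; rewrite ?a00 ?a10 ?a01 ?a11.
by split; apply: colz.
Qed.

Lemma back2 (x y : R) A : x * y != 0 -> x^+4 + y^+4 = 1 ->
  A ord0 ord_max = x -> A ord_max ord_max = y -> A ord0 ord0 = 0 -> A ord_max ord0 = 0 ->
  extreme_contraction A.
Proof.
move=> xy hu a00 a10 a01 a11.
have hc : contr A.
  move=> p q; rewrite /Pm a00 a10 a01 a11 !mul0r !add0r !exprMn.
  have : 0 <= p^+4 by exact: exprn_even_ge0.
  rewrite -mulrDl hu mul1r; lra.
have hn : opnorm A = 1.
  apply/eqP; rewrite eq_le contr_opnorm //=.
  have := le_opnorm A (v := mkv 0 1).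
  rewrite norm4M norm4E !mkv0 !mkv1 /Pm a00 a10 a01 a11 !mulr1 !mulr0 !add0r expr0n /= add0r expr1n ss1 hu ss1.
  by move=> /(_ (lexx _)).
split=> //; split; first by rewrite /in_unit_ball hn.
move=> B C t hB hC ht hA.
have cB := ball_contr hB; have cC := ball_contr hC.
have hB1 : B ord0 ord_max ^+4 + B ord_max ord_max ^+4 <= 1.
  by have := cC 0 1; have := cB 0 1; rewrite /Pm !mulr1 !mulr0 !add0r expr0n /= add0r expr1n.
have hC1 : C ord0 ord_max ^+4 + C ord_max ord_max ^+4 <= 1.
  by have := cC 0 1; rewrite /Pm !mulr1 !mulr0 !add0r expr0n /= add0r expr1n.
have ent : forall i j, A i j = t * B i j + (1 - t) * C i j.
  by move=> i j; rewrite hA !mxE.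
have [e0 e1] : B ord0 ord_max = C ord0 ord_max /\ B ord_max ord_max = C ord_max ord_max.
  apply: (sc ht hB1 hC1); by rewrite -!ent a00 a10.
have bx : B ord0 ord_max = x by rewrite -a00 ent -e0; ring.
have by' : B ord_max ord_max = y by rewrite -a10 ent -e1; ring.
have cx : C ord0 ord_max = x by rewrite -e0.
have cy : C ord_max ord_max = y by rewrite -e1.
have colz : forall D, contr D -> D ord0 ord_max = x -> D ord_max ord_max = y -> D = A.
  move=> D cD dx dy.
  have [z1 z2] : D ord0 ord0 = 0 /\ D ord_max ord0 = 0.
    apply: (col2 xy hu) => be.
    by have := cD be 1; rewrite /Pm !mulr1 expr1n dx dy (addrC (D ord0 ord0 * be)) (addrC (D ord_max ord0 * be)) (addrC (be^+4)).
  by apply: mx2_eq; rewrite ?a00 ?a10 ?a01 ?a11.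
by split; apply: colz.
Qed.

End S6.


Section S7.
Variable R : realType.
Implicit Types (A B C E : 'M[R]_2).

Lemma p4 (p : R) : 0 <= p^+4. Proof. exact: exprn_even_ge0. Qed.

Lemma ss_lt1 (K : R) : 0 <= K -> K < 1 -> Num.sqrt (Num.sqrt K) < 1.
Proof.
move=> K0 K1; rewrite ltNge; apply/negP => h.
have := exprn_ege1 4 h; rewrite ss4 //; lra.
Qed.

Lemma col_norm A j j' : opnorm A = 1 -> contr A -> A ord0 j' = 0 -> A ord_max j' = 0 ->
  (forall p q, Pm A p q = (A ord0 j ^+4 + A ord_max j ^+4) * (if j == ord0 then p else q)^+4) ->
  A ord0 j ^+4 + A ord_max j ^+4 = 1.
Proof.
move=> hn hc z0 z1 hP.
set K := A ord0 j ^+4 + A ord_max j ^+4.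
have K0 : 0 <= K by rewrite /K addr_ge0 // p4.
apply/eqP; rewrite eq_le; apply/andP; split.
  have := hc (if j == ord0 then 1 else 0) (if j == ord0 then 0 else 1).
  rewrite hP; case: (j == ord0); rewrite expr1n mulr1 ?expr0n /= ?addr0 ?add0r //.
rewrite leNgt; apply/negP => hK.
have : opnorm A <= Num.sqrt (Num.sqrt K).
  apply: opnorm_le => // p q hpq; rewrite hP.
  have hp := le1_4 hpq.
  have hq : q^+4 <= 1 by have := p4 p; lra.
  by case: (j == ord0); rewrite ler_piMr.
have := ss_lt1 K0 hK; rewrite hn; lra.
Qed.


Lemma fwd A : \rank A = 1%N -> extreme_contraction A ->
  exists x1 y1 : R,
    [/\ x1 * y1 != 0, x1 ^+ 4 + y1 ^+ 4 = 1 &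
      (A = \matrix_(i < 2, j < 2)
             (if j == ord0 then (if i == ord0 then x1 else y1) else 0)
       \/ A = \matrix_(i < 2, j < 2)
             (if j == ord_max then (if i == ord0 then x1 else y1) else 0))].
Proof.
move=> hr [hn hext].
have hc : contr A by apply: opnorm_contr; rewrite hn.
have hnz := rank1_nz hr; have hdet := rank1_det hr.
move Ha : (A ord0 ord0) => a; move Hb : (A ord0 ord_max) => b.
move Hc : (A ord_max ord0) => c; move Hd : (A ord_max ord_max) => d.
rewrite Ha Hb Hc Hd in hdet.
have [/andP[/eqP b0 /eqP d0]|c2nz] := boolP ((b == 0) && (d == 0)).
  have hs : a^+4 + c^+4 = 1.
    rewrite -Ha -Hc; apply: (@col_norm A ord0 ord_max) => //; rewrite ?Hb ?Hd //.
    by move=> p q; rewrite /Pm Ha Hb Hc Hd b0 d0 /=; ring.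
  exists a, c; split => //; last first.
    by left; apply: mx2_eq; rewrite !mxE /= ?Ha ?Hb ?Hc ?Hd.
  rewrite mulf_eq0 negb_or; apply/andP; split; apply/negP => /eqP z.
    have c4 : c^+4 = 1 by rewrite -hs z expr0n add0r.
    have := @noext _ A (mk2 0 (1/2) 0 0) hext.
    have hh : forall s : R, s^+2 = 1 -> contr (A + s *: mk2 0 (1/2) 0 0).
      move=> s hs2 p q; rewrite /Pm !mxE /= Ha Hb Hc Hd z b0 d0.
      have -> : ((0 + s * 0) * p + (0 + s * (1 / 2)) * q) ^+ 4 + ((c + s * 0) * p + (0 + s * 0) * q) ^+ 4
          = s^+2 * s^+2 / 16 * q^+4 + c^+4 * p^+4 by field.
      rewrite hs2 c4; have := p4 q; have := p4 p; lra.
    have h1 := hh 1 (expr1n _ _); have h2 := hh (-1) (ltac:(by rewrite sqrrN expr1n)).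
    rewrite scale1r in h1; rewrite scaleN1r in h2.
    move=> /(_ h1 h2) /matrixP /(_ ord0 ord_max); rewrite !mxE /=; lra.
  have a4 : a^+4 = 1 by rewrite -hs z expr0n addr0.
  have := @noext _ A (mk2 0 0 0 (1/2)) hext.
  have hh : forall s : R, s^+2 = 1 -> contr (A + s *: mk2 0 0 0 (1/2)).
    move=> s hs2 p q; rewrite /Pm !mxE /= Ha Hb Hc Hd z b0 d0.
    have -> : ((a + s * 0) * p + (0 + s * 0) * q) ^+ 4 + ((0 + s * 0) * p + (0 + s * (1 / 2)) * q) ^+ 4
        = a^+4 * p^+4 + s^+2 * s^+2 / 16 * q^+4 by field.
    rewrite hs2 a4; have := p4 q; have := p4 p; lra.
  have h1 := hh 1 (expr1n _ _); have h2 := hh (-1) (ltac:(by rewrite sqrrN expr1n)).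
  rewrite scale1r in h1; rewrite scaleN1r in h2.
  move=> /(_ h1 h2) /matrixP /(_ ord_max ord_max); rewrite !mxE /=; lra.
have [/andP[/eqP a0 /eqP c0]|c1nz] := boolP ((a == 0) && (c == 0)).
  have hs : b^+4 + d^+4 = 1.
    rewrite -Hb -Hd; apply: (@col_norm A ord_max ord0) => //; rewrite ?Ha ?Hc //.
    by move=> p q; rewrite /Pm Ha Hb Hc Hd a0 c0 /=; ring.
  exists b, d; split => //; last first.
    by right; apply: mx2_eq; rewrite !mxE /= ?Ha ?Hb ?Hc ?Hd.
  rewrite mulf_eq0 negb_or; apply/andP; split; apply/negP => /eqP z.
    have d4 : d^+4 = 1 by rewrite -hs z expr0n add0r.
    have := @noext _ A (mk2 (1/2) 0 0 0) hext.
    have hh : forall s : R, s^+2 = 1 -> contr (A + s *: mk2 (1/2) 0 0 0).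
      move=> s hs2 p q; rewrite /Pm !mxE /= Ha Hb Hc Hd z a0 c0.
      have -> : ((0 + s * (1 / 2)) * p + (0 + s * 0) * q) ^+ 4 + ((0 + s * 0) * p + (d + s * 0) * q) ^+ 4
          = s^+2 * s^+2 / 16 * p^+4 + d^+4 * q^+4 by field.
      rewrite hs2 d4; have := p4 q; have := p4 p; lra.
    have h1 := hh 1 (expr1n _ _); have h2 := hh (-1) (ltac:(by rewrite sqrrN expr1n)).
    rewrite scale1r in h1; rewrite scaleN1r in h2.
    move=> /(_ h1 h2) /matrixP /(_ ord0 ord0); rewrite !mxE /=; lra.
  have b4 : b^+4 = 1 by rewrite -hs z expr0n addr0.
  have := @noext _ A (mk2 0 0 (1/2) 0) hext.
  have hh : forall s : R, s^+2 = 1 -> contr (A + s *: mk2 0 0 (1/2) 0).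
    move=> s hs2 p q; rewrite /Pm !mxE /= Ha Hb Hc Hd z a0 c0.
    have -> : ((0 + s * 0) * p + (b + s * 0) * q) ^+ 4 + ((0 + s * (1 / 2)) * p + (0 + s * 0) * q) ^+ 4
        = b^+4 * q^+4 + s^+2 * s^+2 / 16 * p^+4 by field.
    rewrite hs2 b4; have := p4 q; have := p4 p; lra.
  have h1 := hh 1 (expr1n _ _); have h2 := hh (-1) (ltac:(by rewrite sqrrN expr1n)).
  rewrite scale1r in h1; rewrite scaleN1r in h2.
  move=> /(_ h1 h2) /matrixP /(_ ord_max ord0); rewrite !mxE /=; lra.
exfalso.
have [k [hb hd]] : exists k, b = k * a /\ d = k * c.
  have [a0|a0] := eqVneq a 0.
    have c0 : c != 0 by move: c1nz; rewrite a0 eqxx.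
    exists (d / c); split; last by rewrite divfK.
    by move: hdet; rewrite a0 mul0r => /esym /eqP; rewrite mulf_eq0 (negPf c0) orbF => /eqP ->; rewrite mulr0.
  exists (b / a); split; first by rewrite divfK.
  by apply: (mulfI a0); rewrite hdet; field.
have k0 : k != 0 by apply/negP => /eqP k0; move: c2nz; rewrite hb hd k0 !mul0r eqxx.
have [bb hbb] := cube_root k.
have bb0 : bb != 0.
  apply/eqP => z; move/eqP: k0; apply; by rewrite -hbb z expr0n.
set U := Ua a c.
have U0 : 0 < U.
  rewrite /U /Ua; have [a0|a0] := eqVneq a 0.
    have c0 : c != 0 by move: c1nz; rewrite a0 eqxx.
    by rewrite ltr_wpDl ?p4 // exprn_even_gt0.
  by rewrite ltr_wpDr ?p4 // exprn_even_gt0.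
have N0 : 0 < 1 + bb^+4 by rewrite ltr_wpDr ?p4.
have hUN : U * (1 + bb^+4)^+3 <= 1.
  have := hc 1 bb; rewrite /Pm Ha Hb Hc Hd hb hd -hbb.
  have -> : (a * 1 + bb ^+ 3 * a * bb) ^+ 4 + (c * 1 + bb ^+ 3 * c * bb) ^+ 4
     = (U * (1 + bb^+4)^+3) * (1 + bb^+4) by rewrite /U /Ua; ring.
  by rewrite expr1n => h; rewrite -(ler_pM2r N0) mul1r.
set X := Xc a c; set Y := Yc a c bb.
have X0 : 0 < X.
  rewrite /X /Xc -/U.
  have h1 : 0 <= 6 * (a ^+ 2 * c ^+ 2 * U) by apply: mulr_ge0 => //; apply: mulr_ge0; [apply: mulr_ge0; exact: sqr_ge0| exact: ltW].
  have h2 : 0 <= 2 * (a * c ^+ 9 - c * a ^+ 9) ^+ 2 by apply: mulr_ge0 => //; exact: sqr_ge0.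
  have h3 : 0 <= a ^+ 12 + c ^+ 12 by rewrite addr_ge0 // exprn_even_ge0.
  lra.
have Y0 : 0 < Y.
  rewrite /Y /Yc -/U; apply: divr_gt0; last by rewrite ltr_wpDr ?sqr_ge0.
  by rewrite mulr_gt0 // mulr_gt0 // exprn_even_gt0.
set e := Y / (X + Y).
have e0 : 0 < e by rewrite /e divr_gt0 // addr_gt0.
have XY : 0 < X + Y by rewrite addr_gt0.
have e1 : e <= 1 by rewrite /e ler_pdivrMr //; lra.
have he : e^+2 <= 1 by rewrite expr_le1 // ltW.
have hX : e^+2 * X <= Y.
  have : e * X <= Y by rewrite /e mulrAC ler_pdivrMr //; nra.
  have : e^+2 * X <= e * X.
    have h1e : 0 <= 1 - e by lra.
    have := mulr_ge0 (mulr_ge0 (ltW e0) h1e) (ltW X0); rewrite expr2; nra.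
  lra.
pose E := mk2 (e * bb * c^+3) (- e * c^+3) (- e * bb * a^+3) (e * a^+3).
have hh : forall s : R, s^+2 = 1 -> contr (A + s *: E).
  move=> s hs2 p q.
  have := pert p q bb0 hUN (e := s * e) (ltac:(by rewrite exprMn hs2 mul1r)) (ltac:(by rewrite exprMn hs2 mul1r)).
  rewrite /Pm !mxE /= Ha Hb Hc Hd hb hd -hbb.
  have -> : ((a + s * (e * bb * c ^+ 3)) * p + (bb ^+ 3 * a + s * (- e * c ^+ 3)) * q) ^+ 4 +
    ((c + s * (- e * bb * a ^+ 3)) * p + (bb ^+ 3 * c + s * (e * a ^+ 3)) * q) ^+ 4 =
    ((p + bb ^+ 3 * q) * a + s * e * (bb * p - q) * c ^+ 3) ^+ 4 +
    ((p + bb ^+ 3 * q) * c - s * e * (bb * p - q) * a ^+ 3) ^+ 4 by ring.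
  by [].
have h1 := hh 1 (expr1n _ _); have h2 := hh (-1) (ltac:(by rewrite sqrrN expr1n)).
rewrite scale1r in h1; rewrite scaleN1r in h2.
have := @noext _ A E hext h1 h2.
move/matrixP => hE.
have := hE ord0 ord_max; have := hE ord_max ord_max; rewrite !mxE /=.
move=> /eqP; rewrite mulf_eq0 (gt_eqF e0) /= expf_eq0 /= => /eqP a0.
move=> /eqP; rewrite mulf_eq0 oppr_eq0 (gt_eqF e0) /= expf_eq0 /= => /eqP c0.
by move: c1nz; rewrite a0 c0 eqxx.
Qed.
End S7.


Theorem mainTheorem12 (R : realType) (A : 'M[R]_2) :
  (\rank A = 1%N /\ extreme_contraction A) <->
  exists x1 y1 : R,
    [/\ x1 * y1 != 0, x1 ^+ 4 + y1 ^+ 4 = 1 &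
      (A = \matrix_(i < 2, j < 2)
             (if j == ord0 then (if i == ord0 then x1 else y1) else 0)
       \/ A = \matrix_(i < 2, j < 2)
             (if j == ord_max then (if i == ord0 then x1 else y1) else 0))].
Proof.
split.
  by move=> [hr he]; exact: fwd.
move=> [x [y [xy hu hA]]].
have [x0 y0] : x != 0 /\ y != 0 by move: xy; rewrite mulf_eq0 negb_or => /andP.
case: hA => ->; split.
- apply: (@rank_one _ _ ord_max); rewrite ?mxE //.
  by apply/negP => /eqP /matrixP /(_ ord0 ord0); rewrite !mxE /=; apply/eqP.
- by apply: (back1 xy hu); rewrite !mxE.
- apply: (@rank_one _ _ ord0); rewrite ?mxE //.
  by apply/negP => /eqP /matrixP /(_ ord0 ord_max); rewrite !mxE /=; apply/eqP.
- by apply: (back2 xy hu); rewrite !mxE.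
Qed.
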